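(* Let $0<\alpha<1$ and suppose the Hilbert matrix operator $\mathcal{H}$ acts as an operator $\mathcal{H}\colon H^\infty_\alpha\to H^\infty_\alpha$. Then $$\|\mathcal{H}\|_{H^\infty_\alpha\to H^\infty_\alpha}\ \ge\ \frac{\pi}{\sin(\pi\alpha)}.$$
   Context: $\mathbb D=\{z\in\mathbb C:|z|<1\}$ and $H(\mathbb D)$ denotes the analytic functions on $\mathbb D$. For $0<\alpha<1$, the Korenblum space is $H^\infty_\alpha=\{f\in H(\mathbb D): \|f\|_{H^\infty_\alpha}=\sup_{z\in\mathbb D}(1-|z|^2)^\alpha|f(z)|<\infty\}$. The Hilbert matrix operator acts on $f(z)=\sum_{k\ge0}a_kz^k$ by $\mathcal{H}(f)(z)=\sum_{n\ge0}\big(\sum_{k\ge0}\frac{a_k}{n+k+1}\big)z^n$; equivalently $\mathcal{H}(f)(z)=\int_0^1 T_t(f)(z)\,dt$, where $T_t(f)(z)=\omega_t(z)f(\phi_t(z))$ with $\omega_t(z)=\frac{1}{(t-1)z+1}$ and $\phi_t(z)=\frac{t}{(t-1)z+1}$, $0<t<1$. *)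

(* Defs.v *)
From Stdlib Require Import Reals.
From Coquelicot Require Import Coquelicot.
Open Scope R_scope.

(* Sum of a complex series, computed componentwise (equals the limit when the
   series converges in C). *)
Definition Csum (u : nat -> C) : C :=
  (Series (fun k => fst (u k)), Series (fun k => snd (u k))).

(* An analytic function on the unit disc D, given by its Taylor coefficients
   a : nat -> C; the power series converges at every point of D. *)
Definition analytic_on_disc (a : nat -> C) : Prop :=
  forall z : C, Cmod z < 1 -> ex_series (fun k => (a k * Cpow z k)%C).

Definition fun_of_coef (a : nat -> C) (z : C) : C :=
  Csum (fun k => (a k * Cpow z k)%C).

Definition kweight (alpha : R) (z : C) : R := Rpower (1 - Cmod z ^ 2) alpha.

Definition korenblum_norm (alpha : R) (a : nat -> C) : Rbar :=
  Lub_Rbar (fun y => exists z : C, Cmod z < 1 /\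
              y = kweight alpha z * Cmod (fun_of_coef a z)).

Definition in_korenblum (alpha : R) (a : nat -> C) : Prop :=
  analytic_on_disc a /\
  exists M : R, forall z : C, Cmod z < 1 ->
      kweight alpha z * Cmod (fun_of_coef a z) <= M.

Definition hilbert_defined (a : nat -> C) : Prop :=
  forall n : nat, ex_series (fun k => (a k * RtoC (/ INR (n + k + 1)))%C).

Definition hilbert_coef (a : nat -> C) (n : nat) : C :=
  Csum (fun k => (a k * RtoC (/ INR (n + k + 1)))%C).

Definition hilbert_norm (alpha : R) : Rbar :=
  Lub_Rbar (fun y => exists a : nat -> C,
     in_korenblum alpha a /\ Rbar_le (korenblum_norm alpha a) (Finite 1) /\
     korenblum_norm alpha (hilbert_coef a) = Finite y).

(* Main.v *)
Require Import Defs.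
From Stdlib Require Import Reals Lra Lia Psatz.
From Coquelicot Require Import Coquelicot.
Open Scope R_scope.

Fixpoint fs (u : nat -> R) (N : nat) : R :=
  match N with O => 0 | S N => fs u N + u N end.

Lemma sum_n_fs u N : sum_n u N = fs u (S N).
Proof.
  induction N. rewrite sum_O; simpl; change (0 + u 0%nat = u 0%nat) with (0 + u 0%nat = u 0%nat); lra.
  rewrite sum_Sn, IHN. simpl. unfold plus; simpl. ring.
Qed.

Lemma fs_ext u v N : (forall n, (n < N)%nat -> u n = v n) -> fs u N = fs v N.
Proof. induction N; intros H; simpl; auto. rewrite IHN, H; auto. Qed.

Lemma fs_le u v N : (forall n, (n < N)%nat -> u n <= v n) -> fs u N <= fs v N.
Proof. induction N; intros H; simpl. lra. pose proof (H N ltac:(lia)). pose proof (IHN ltac:(intros; apply H; lia)). lra. Qed.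

Lemma fs_nonneg u N : (forall n, 0 <= u n) -> 0 <= fs u N.
Proof. intros H; induction N; simpl. lra. pose proof (H N); lra. Qed.

Lemma fs_mono u N M : (forall n, 0 <= u n) -> (N <= M)%nat -> fs u N <= fs u M.
Proof. intros H Hl; induction Hl. lra. simpl. pose proof (H m); lra. Qed.

Lemma fs_plus u v N : fs (fun n => u n + v n) N = fs u N + fs v N.
Proof. induction N; simpl. ring. rewrite IHN; ring. Qed.

Lemma fs_scal c u N : fs (fun n => c * u n) N = c * fs u N.
Proof. induction N; simpl. ring. rewrite IHN; ring. Qed.

Lemma fs_split u N M : fs u (N + M) = fs u N + fs (fun n => u (N + n)%nat) M.
Proof. induction M; simpl. rewrite Nat.add_0_r; ring. rewrite Nat.add_succ_r; simpl. rewrite IHM; ring. Qed.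

Lemma is_series_fs u l : is_series u l <-> is_lim_seq (fs u) l.
Proof.
  split; intros H.
  - apply is_lim_seq_incr_1. eapply is_lim_seq_ext; [|exact H]. intros; apply sum_n_fs.
  - apply is_lim_seq_incr_1 in H. eapply is_lim_seq_ext in H; [exact H|]. intros; simpl; rewrite sum_n_fs; reflexivity.
Qed.

Lemma fs_le_lim u l N : (forall n, 0 <= u n) -> is_series u l -> fs u N <= l.
Proof.
  intros Hp Hs. apply is_series_fs in Hs.
  assert (H := is_lim_seq_le (fun _ => fs u N) (fun k => fs u (N + k)) (fs u N) l).
  simpl in H. apply H. intros; apply fs_mono; auto. lia.
  apply is_lim_seq_const.
  apply (is_lim_seq_incr_n (fs u) N l) in Hs. eapply is_lim_seq_ext; [|exact Hs]. intros; simpl; rewrite Nat.add_comm; reflexivity.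
Qed.

Lemma lim_le_bound u l C : is_series u l -> (forall N, fs u N <= C) -> l <= C.
Proof.
  intros Hs HC. apply is_series_fs in Hs.
  assert (H := is_lim_seq_le (fs u) (fun _ => C) l C HC Hs (is_lim_seq_const C)). exact H.
Qed.

Lemma series_tail_le u w N W :
  (forall n, 0 <= u n) -> ex_series u -> (forall n, 0 <= w n) ->
  (forall n, u (N + n)%nat <= w n) -> is_series w W -> Series u <= fs u N + W.
Proof.
  intros Hu [l Hl] Hw Huw HW. rewrite (is_series_unique _ _ Hl).
  apply (lim_le_bound u l); auto. intros M.
  apply Rle_trans with (fs u (N + M)). apply fs_mono; auto; lia.
  rewrite fs_split. apply Rplus_le_compat_l.
  apply Rle_trans with (fs w M). apply fs_le; auto. apply fs_le_lim; auto.
Qed.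

Lemma series_ge_fs u N : (forall n, 0 <= u n) -> ex_series u -> fs u N <= Series u.
Proof. intros Hu [l Hl]. rewrite (is_series_unique _ _ Hl). apply fs_le_lim; auto. Qed.

Lemma is_derive_fs (g : R -> nat -> R) (dg : nat -> R) x N :
  (forall n, (n < N)%nat -> is_derive (fun y => g y n) x (dg n)) ->
  is_derive (fun y => fs (g y) N) x (fs dg N).
Proof.
  induction N; intros H; simpl.
  - apply (is_derive_const 0).
  - apply (is_derive_plus (fun y => fs (g y) N) (fun y => g y N)). apply IHN; intros; apply H; lia. apply H; lia.
Qed.

Definition wt (c : R) (n : nat) : R := / ((c + INR n) * (c + INR n + 1)).

Lemma lim_inv_lin c : 0 < c -> is_lim_seq (fun n => / (c + INR n)) 0.
Proof.
  intros Hc.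
  assert (H : is_lim_seq (fun n => c + INR n) p_infty).
  { eapply is_lim_seq_plus. apply is_lim_seq_const. apply is_lim_seq_INR. simpl. constructor. }
  apply is_lim_seq_inv in H; [|discriminate]. exact H.
Qed.

Lemma is_series_wt c : 0 < c -> is_series (wt c) (/ c).
Proof.
  intros Hc. apply is_series_fs.
  assert (E : forall N, fs (wt c) N = / c - / (c + INR N)).
  { induction N. simpl. replace (c + 0) with c by ring. ring.
    simpl fs. rewrite IHN. unfold wt. rewrite S_INR.
    assert (0 <= INR N) by apply pos_INR. field. lra. }
  eapply is_lim_seq_ext. intros; symmetry; apply E.
  replace (Finite (/ c)) with (Rbar_minus (/ c) 0) by (simpl; f_equal; ring).
  apply is_lim_seq_minus'. apply is_lim_seq_const. apply lim_inv_lin; auto.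
Qed.

Lemma wt_pos c n : 0 < c -> 0 <= wt c n.
Proof. intros; unfold wt. assert (0 <= INR n) by apply pos_INR. apply Rlt_le, Rinv_0_lt_compat. nra. Qed.

Definition q (x : R) (n : nat) : R := / (x + INR n) ^ 2 + / (1 - x + INR n) ^ 2.
Definition Q (x : R) : R := Series (q x).

Lemma q_pos x n : 0 < x < 1 -> 0 < q x n.
Proof.
  intros Hx; unfold q. assert (0 <= INR n) by apply pos_INR.
  apply Rplus_lt_0_compat; apply Rinv_0_lt_compat; apply pow_lt; lra.
Qed.

Lemma q_tail_bound x N n : 0 < x < 1 -> (1 <= N)%nat -> q x (N + n) <= 4 * wt (INR N) n.
Proof.
  intros Hx HN. unfold q, wt. rewrite plus_INR.
  assert (1 <= INR N) by (apply (le_INR 1); auto).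
  assert (0 <= INR n) by apply pos_INR.
  set (m := INR N + INR n) in *.
  assert (Hm : 1 <= m) by (unfold m; lra).
  assert (/ (x + m) ^ 2 <= 2 * / (m * (m+1))).
  { rewrite <- (Rmult_1_l (/ (x+m)^2)). apply Rle_trans with (2 * / (x+m)^2 / 2 * 1). lra.
    unfold Rdiv. apply Rmult_le_reg_l with ((x+m)^2 * (m * (m+1))). apply Rmult_lt_0_compat; nra.
    field_simplify; try nra. }
  assert (/ (1 - x + m) ^ 2 <= 2 * / (m * (m+1))).
  { unfold Rdiv. apply Rmult_le_reg_l with ((1-x+m)^2 * (m * (m+1))). apply Rmult_lt_0_compat; nra.
    field_simplify; try nra. }
  lra.
Qed.

Lemma ex_series_wt4 c : 0 < c -> ex_series (fun n => 4 * wt c n).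
Proof. intros Hc. exists (4 * / c). apply (is_series_scal_l 4 (wt c)). apply is_series_wt; auto. Qed.

Lemma ex_series_q x : 0 < x < 1 -> ex_series (q x).
Proof.
  intros Hx. apply (ex_series_incr_n (q x) 1).
  apply (@ex_series_le R_AbsRing R_CompleteNormedModule _ (fun n => 4 * wt (INR 1) n)).
  - intros n. change norm with Rabs; simpl. rewrite Rabs_pos_eq. apply (q_tail_bound x 1 n); auto.
    apply Rlt_le, q_pos; auto.
  - apply ex_series_wt4. simpl; lra.
Qed.

Lemma Q_tail x N : 0 < x < 1 -> (1 <= N)%nat -> fs (q x) N <= Q x <= fs (q x) N + 4 / INR N.
Proof.
  intros Hx HN. assert (1 <= INR N) by (apply (le_INR 1); auto). split.
  - apply series_ge_fs. intros; apply Rlt_le, q_pos; auto. apply ex_series_q; auto.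
  - unfold Q. apply series_tail_le with (w := fun n => 4 * wt (INR N) n).
    intros; apply Rlt_le, q_pos; auto. apply ex_series_q; auto.
    intros; assert (0 <= wt (INR N) n) by (apply wt_pos; lra); lra.
    intros; apply q_tail_bound; auto.
    replace (4 / INR N) with (4 * / INR N) by (unfold Rdiv; ring).
    apply (is_series_scal_l 4 (wt (INR N))). apply is_series_wt; lra.
Qed.

Lemma fs_pairs u N : fs (fun n => u (2 * n)%nat + u (S (2 * n))) N = fs u (2 * N).
Proof.
  induction N. reflexivity.
  replace (2 * S N)%nat with (S (S (2 * N))) by lia. change (fs (fun n => u (2 * n)%nat + u (S (2 * n))) N + (u (2 * N)%nat + u (S (2 * N))) = fs u (2 * N) + u (2 * N)%nat + u (S (2 * N))). rewrite IHN. ring.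
Qed.

Lemma series_pairs u : ex_series u -> is_series (fun n => u (2 * n)%nat + u (S (2 * n))) (Series u).
Proof.
  intros Hu. apply Series_correct in Hu. apply is_series_fs in Hu. apply is_series_fs.
  eapply is_lim_seq_ext. intros; symmetry; apply fs_pairs.
  apply (is_lim_seq_subseq (fs u) _ (fun n => 2 * n)%nat); auto.
  intros P [M HM]. exists M. intros n Hn. apply HM. lia.
Qed.

Lemma Q_dup x : 0 < x < 1 -> Q (x / 2) + Q ((x + 1) / 2) = 4 * Q x.
Proof.
  intros Hx. unfold Q. rewrite <- Series_plus; try (apply ex_series_q; lra).
  rewrite <- (is_series_unique _ _ (series_pairs (q x) (ex_series_q x Hx))).
  rewrite <- Series_scal_l. apply Series_ext. intros n. unfold q.
  rewrite ?mult_INR, ?S_INR, ?mult_INR. simpl INR.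
  assert (0 <= INR n) by apply pos_INR.
  field. repeat split; nra.
Qed.

Lemma PI_gt_3 : 3 < PI. Proof. pose proof PI2_3_2; lra. Qed.

Lemma INR_lit n : INR n = IZR (Z.of_nat n). Proof. apply INR_IZR_INZ. Qed.

Lemma sin_bounds y : 0 <= y <= 2 -> y - y ^ 3 / 6 <= sin y <= y.
Proof.
  intros Hy. pose proof PI_gt_3. destruct (SIN y) as [H1 H2]; try lra.
  unfold sin_lb, sin_ub, sin_approx, sin_term in *. cbn [sum_f_R0] in *.
  change (2 * 0 + 1)%nat with 1%nat in *.
  change (2 * 1 + 1)%nat with 3%nat in *.
  change (2 * 2 + 1)%nat with 5%nat in *.
  change (2 * 3 + 1)%nat with 7%nat in *.
  assert (F1 : INR (Factorial.fact 1) = 1) by (simpl; ring).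
  assert (F3 : INR (Factorial.fact 3) = 6) by (rewrite !fact_simpl; cbn [Factorial.fact]; rewrite !mult_INR; simpl INR; ring).
  assert (F5 : INR (Factorial.fact 5) = 120) by (rewrite !fact_simpl; cbn [Factorial.fact]; rewrite !mult_INR; simpl INR; ring).
  assert (F7 : INR (Factorial.fact 7) = 5040) by (rewrite !fact_simpl; cbn [Factorial.fact]; rewrite !mult_INR; simpl INR; ring).
  rewrite F1, F3, F5, F7 in *.
  simpl pow in *. 
  idtac.
  split. all: cbn [pow] in *.
  - assert (y^5/120 - y^7/5040 >= 0). { assert (0 <= y^5) by (apply pow_le; lra).
      assert (y^2 <= 4) by nra. replace (y^5/120 - y^7/5040) with (y^5 * ((42 - y^2)/5040)) by field. apply Rle_ge, Rmult_le_pos; lra. }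
    nra.
  - destruct (Req_dec y 0) as [->|Hy0]. rewrite sin_0; lra. apply Rlt_le, sin_lt_x; lra.
Qed.


Lemma csc_sq_bound y : 0 < y <= 2 -> 0 <= / sin y ^ 2 - / y ^ 2 <= 3.
Proof.
  intros Hy. destruct (sin_bounds y) as [H1 H2]; [lra|].
  set (s := sin y) in *.
  assert (Hs : y / 3 <= s) by nra.
  assert (Hs0 : 0 < s) by lra.
  replace (/ s ^ 2 - / y ^ 2) with ((y^2 - s^2) / (s^2 * y^2)) by (field; lra).
  split.
  - apply Rmult_le_pos. replace (y^2 - s^2) with ((y-s)*(y+s)) by ring. apply Rmult_le_pos; lra. apply Rlt_le, Rinv_0_lt_compat. apply Rmult_lt_0_compat; apply pow_lt; lra.
  - assert (Hp : 0 < s^2 * y^2) by (apply Rmult_lt_0_compat; apply pow_lt; lra). apply Rmult_le_reg_r with (s^2 * y^2). exact Hp.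
    unfold Rdiv. rewrite Rmult_assoc, Rinv_l by lra. rewrite Rmult_1_r.
    assert (y - s <= y^3/6) by lra.
    assert (y^2 - s^2 <= y^4/3).
    { replace (y^2 - s^2) with ((y - s) * (y + s)) by ring.
      replace (y^4/3) with (y^3/6 * (2*y)) by field. apply Rmult_le_compat; lra. }
    assert (y^4/3 <= 3 * (s^2 * y^2)).
    { assert ((y/3)^2 <= s^2) by (apply pow_incr; lra). nra. }
    lra.
Qed.

Definition Hf (x : R) : R := PI ^ 2 / sin (PI * x) ^ 2 - Q x.

Lemma phi_bound_half x : 0 < x <= 1/2 ->
  -4 <= PI ^ 2 / sin (PI * x) ^ 2 - / x ^ 2 - / (1 - x) ^ 2 <= 3 * PI ^ 2.
Proof.
  intros Hx. pose proof PI_gt_3. pose proof PI_4.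
  destruct (csc_sq_bound (PI * x)) as [A1 A2]. split. nra. nra.
  assert (E : PI ^ 2 / sin (PI * x) ^ 2 - / x ^ 2 = PI^2 * (/ sin (PI * x) ^ 2 - / (PI * x) ^ 2)).
  { unfold Rdiv. rewrite Rmult_minus_distr_l. f_equal. field. lra. }
  assert (1 <= / (1 - x) ^ 2 <= 4).
  { split. rewrite <- Rinv_1. apply Rinv_le_contravar. apply pow_lt; lra. 
    replace 1 with (1^2) by ring. apply pow_incr; lra.
    replace 4 with (/ (1/2)^2) by field. apply Rinv_le_contravar. apply pow_lt; lra. apply pow_incr; lra. }
  assert (0 <= PI^2 * (/ sin (PI * x) ^ 2 - / (PI * x) ^ 2) <= 3 * PI^2).
  { split. apply Rmult_le_pos; nra. nra. }
  lra.
Qed.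

Lemma phi_bound x : 0 < x < 1 ->
  -4 <= PI ^ 2 / sin (PI * x) ^ 2 - / x ^ 2 - / (1 - x) ^ 2 <= 3 * PI ^ 2.
Proof.
  intros Hx. destruct (Rle_lt_dec x (1/2)).
  - apply phi_bound_half; lra.
  - replace (sin (PI * x)) with (sin (PI * (1 - x))).
    2:{ replace (PI * (1 - x)) with (PI - PI * x) by ring. apply sin_PI_x. }
    pose proof (phi_bound_half (1 - x) ltac:(lra)).
    replace (1 - (1 - x)) with x in H by ring. lra.
Qed.

Lemma Hf_bound x : 0 < x < 1 -> Rabs (Hf x) <= 3 * PI ^ 2 + 8.
Proof.
  intros Hx. destruct (Q_tail x 1 Hx (le_n 1)) as [T1 T2].
  simpl fs in T1, T2. unfold q in T1, T2. simpl INR in T1, T2.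
  rewrite !Rplus_0_r in T1, T2. rewrite Rplus_0_l in T1, T2.
  pose proof (phi_bound x Hx). unfold Hf. pose proof PI_gt_3.
  assert (0 <= PI^2) by (apply pow_le; lra). replace (4/1) with 4 in T2 by field. apply Rabs_le. lra.
Qed.

Lemma sinPI_pos x : 0 < x < 1 -> 0 < sin (PI * x).
Proof. intros; pose proof PI_gt_3. apply sin_gt_0; nra. Qed.

Lemma Hf_dup x : 0 < x < 1 -> Hf (x / 2) + Hf ((x + 1) / 2) = 4 * Hf x.
Proof.
  intros Hx. unfold Hf.
  assert (E := Q_dup x Hx).
  set (a := PI * (x / 2)).
  assert (Ha1 : sin (PI * ((x + 1) / 2)) = cos a).
  { unfold a. rewrite cos_sin. f_equal. field. }
  assert (Ha2 : sin (PI * x) = 2 * sin a * cos a).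
  { unfold a. rewrite <- sin_2a. f_equal. field. }
  assert (Hs : 0 < sin a) by (unfold a; apply sinPI_pos; lra).
  assert (Hc : 0 < cos a).
  { rewrite <- Ha1. apply sinPI_pos; lra. }
  rewrite Ha1, Ha2.
  assert (sin a ^ 2 + cos a ^ 2 = 1) by (rewrite <- (sin2_cos2 a); unfold Rsqr; ring).
  replace (PI ^ 2 / sin a ^ 2 - Q (x / 2) + (PI ^ 2 / cos a ^ 2 - Q ((x + 1) / 2)))
    with (PI^2 * (sin a ^ 2 + cos a ^ 2) / (sin a ^ 2 * cos a ^ 2) - (Q (x/2) + Q ((x+1)/2))) by (field; lra).
  rewrite H, E. field. lra.
Qed.

Lemma Hf_zero x : 0 < x < 1 -> Hf x = 0.
Proof.
  intros Hx. destruct (Req_dec (Hf x) 0) as [|Hne]; auto. exfalso.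
  set (c := Rabs (Hf x)). assert (Hc : 0 < c) by (apply Rabs_pos_lt; auto).
  assert (Hk : forall k, exists y, 0 < y < 1 /\ 2 ^ k * c <= Rabs (Hf y)).
  { induction k. exists x; split; auto. rewrite pow_O. unfold c. lra.
    destruct IHk as [y [Hy Hy2]].
    pose proof (Hf_dup y Hy).
    assert (4 * Rabs (Hf y) <= Rabs (Hf (y/2)) + Rabs (Hf ((y+1)/2))).
    { replace 4 with (Rabs 4) by (apply Rabs_pos_eq; lra). rewrite <- Rabs_mult, <- H. apply Rabs_triang. }
    destruct (Rle_lt_dec (2 * Rabs (Hf y)) (Rabs (Hf (y/2)))).
    - exists (y/2). split. lra. rewrite <- tech_pow_Rmult. lra.
    - exists ((y+1)/2). split. lra. rewrite <- tech_pow_Rmult. lra. }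
  destruct (INR_archimed c (3 * PI ^ 2 + 8) Hc) as [n Hn].
  destruct (Hk n) as [y [Hy Hy2]].
  pose proof (Hf_bound y Hy).
  assert (INR n <= 2 ^ n).
  { clear. induction n. simpl; lra. rewrite S_INR. simpl.
    assert (1 <= 2 ^ n) by (apply pow_R1_Rle; lra). lra. }
  nra.
Qed.

Lemma Q_val x : 0 < x < 1 -> Q x = PI ^ 2 / sin (PI * x) ^ 2.
Proof. intros Hx. pose proof (Hf_zero x Hx). unfold Hf in H. lra. Qed.



Definition cterm (x : R) (n : nat) : R := / (x + INR n) - / (1 - x + INR n).
Definition CN (x : R) (N : nat) : R := fs (cterm x) N.
Definition cotp (x : R) : R := PI * cos (PI * x) / sin (PI * x).

Lemma derive_cterm x n : 0 < x < 1 -> is_derive (fun y => cterm y n) x (- q x n).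
Proof.
  intros Hx. unfold cterm, q. assert (0 <= INR n) by apply pos_INR.
  auto_derive. split; lra. field. split; lra.
Qed.

Lemma derive_cotp x : 0 < x < 1 -> is_derive cotp x (- (PI ^ 2 / sin (PI * x) ^ 2)).
Proof.
  intros Hx. pose proof (sinPI_pos x Hx). unfold cotp.
  auto_derive. lra.
  assert (sin (PI * x) ^ 2 + cos (PI * x) ^ 2 = 1) by (rewrite <- (sin2_cos2 (PI * x)); unfold Rsqr; ring).
  field_simplify; try lra. f_equal. replace (- PI ^ 2 * sin (PI * x) ^ 2 - PI ^ 2 * cos (PI * x) ^ 2) with (- PI^2 * (sin (PI * x) ^ 2 + cos (PI * x) ^ 2)) by ring. rewrite H0; ring.
Qed.

Lemma cot_approx x N : 0 < x < 1 -> (1 <= N)%nat -> Rabs (cotp x - CN x N) <= 2 / INR N.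
Proof.
  intros Hx HN. assert (HN' : 1 <= INR N) by (apply (le_INR 1); auto).
  set (E := fun y => cotp y - CN y N).
  assert (HD : forall y, 0 < y < 1 -> is_derive E y (- (PI ^ 2 / sin (PI * y) ^ 2) - fs (fun n => - q y n) N)).
  { intros y Hy. unfold E. apply (is_derive_minus cotp (fun y => CN y N)). apply derive_cotp; auto.
    unfold CN. apply (is_derive_fs (fun y n => cterm y n)). intros; apply derive_cterm; auto. }
  assert (E0 : E (1/2) = 0).
  { unfold E, cotp, CN. replace (PI * (1/2)) with (PI/2) by field. rewrite cos_PI2.
    rewrite (fs_ext _ (fun _ => 0)). assert (fs (fun _ => 0) N = 0) by (clear; induction N; simpl; [reflexivity| rewrite IHN; ring]).
    rewrite H. field. rewrite sin_PI2; lra.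
    intros n _. unfold cterm. replace (1 - 1/2) with (1/2) by field. ring. }
  destruct (MVT_gen E (1/2) x (fun y => - (PI ^ 2 / sin (PI * y) ^ 2) - fs (fun n => - q y n) N)) as [c [Hc Hmvt]].
  - intros y Hy. apply HD. split. apply Rlt_le_trans with (Rmin (1/2) x). apply Rmin_glb_lt; lra. lra.
    apply Rle_lt_trans with (Rmax (1/2) x). lra. apply Rmax_lub_lt; lra.
  - intros y Hy. apply continuity_pt_filterlim. apply (ex_derive_continuous E). eexists; apply HD.
    split. apply Rlt_le_trans with (Rmin (1/2) x). apply Rmin_glb_lt; lra. lra.
    apply Rle_lt_trans with (Rmax (1/2) x). lra. apply Rmax_lub_lt; lra.
  - assert (Hc' : 0 < c < 1).
    { split. apply Rlt_le_trans with (Rmin (1/2) x). apply Rmin_glb_lt; lra. lra.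
      apply Rle_lt_trans with (Rmax (1/2) x). lra. apply Rmax_lub_lt; lra. }
    rewrite E0, Rminus_0_r in Hmvt. fold (E x). rewrite Hmvt.
    destruct (Q_tail c N Hc' HN) as [T1 T2]. rewrite Q_val in T1, T2 by auto.
    assert (Hfs : fs (fun n => - q c n) N = - fs (q c) N).
    { transitivity (fs (fun n => -1 * q c n) N). apply fs_ext; intros; ring. rewrite fs_scal; ring. }
    rewrite Hfs. rewrite Rabs_mult.
    assert (Rabs (x - 1/2) <= 1/2) by (apply Rabs_le; lra).
    assert (Rabs (- (PI ^ 2 / sin (PI * c) ^ 2) - - fs (q c) N) <= 4 / INR N).
    { apply Rabs_le. split; lra. }
    assert (0 <= 4 / INR N) by (apply Rlt_le; unfold Rdiv; apply Rmult_lt_0_compat; [lra| apply Rinv_0_lt_compat; lra]).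
    replace (2 / INR N) with (4 / INR N * (1/2)) by (field; lra).
    apply Rmult_le_compat; auto; apply Rabs_pos.
Qed.

Definition salt (al : R) (m : nat) : R := (-1) ^ m * (/ (INR m + al) + / (INR m + (1 - al))).

Lemma salt_identity al N : 0 < al < 1 -> fs (salt al) (2 * N) = CN (al / 2) N - CN al (2 * N).
Proof.
  intros Ha. unfold CN. rewrite <- !fs_pairs.
  rewrite <- (Rplus_0_r (fs (cterm (al/2)) N)).
  transitivity (fs (fun n => cterm (al / 2) n + - (cterm al (2 * n) + cterm al (S (2 * n)))) N).
  2:{ rewrite fs_plus. transitivity (fs (cterm (al / 2)) N + -1 * fs (fun n => cterm al (2 * n) + cterm al (S (2 * n))) N).
      f_equal. rewrite <- fs_scal. apply fs_ext; intros; ring. ring. }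
  apply fs_ext. intros n _. unfold salt, cterm.
  rewrite pow_1_even, pow_1_odd. rewrite S_INR, mult_INR. simpl INR.
  assert (0 <= INR n) by apply pos_INR.
  field. repeat split; lra.
Qed.

Lemma csc_cot al : 0 < al < 1 -> PI / sin (PI * al) = cotp (al / 2) - cotp al.
Proof.
  intros Ha. unfold cotp. set (a := PI * (al / 2)).
  assert (Hs : 0 < sin a) by (unfold a; apply sinPI_pos; lra).
  assert (Hc : 0 < cos a).
  { assert (cos a = sin (PI * ((al + 1) / 2))) by (unfold a; rewrite cos_sin; f_equal; field).
    rewrite H. apply sinPI_pos; lra. }
  replace (PI * al) with (2 * a) by (unfold a; field).
  rewrite sin_2a, cos_2a_cos. field. lra.
Qed.

Lemma salt_approx al N : 0 < al < 1 -> (1 <= N)%nat ->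
  Rabs (fs (salt al) (2 * N) - PI / sin (PI * al)) <= 3 / INR N.
Proof.
  intros Ha HN. assert (HN' : 1 <= INR N) by (apply (le_INR 1); auto).
  rewrite salt_identity, csc_cot by auto.
  pose proof (cot_approx (al/2) N ltac:(lra) HN).
  pose proof (cot_approx al (2 * N) Ha ltac:(lia)).
  rewrite mult_INR in H0. simpl INR in H0.
  replace (CN (al / 2) N - CN al (2 * N) - (cotp (al / 2) - cotp al))
    with (- (cotp (al / 2) - CN (al / 2) N) + (cotp al - CN al (2 * N))) by ring.
  eapply Rle_trans. apply Rabs_triang. rewrite Rabs_Ropp.
  replace (3 / INR N) with (2 / INR N + 2 / (2 * INR N)) by (field; lra). replace ((1+1) * INR N) with (2 * INR N) in H0 by ring. lra.
Qed.

Fixpoint acoef (al : R) (k : nat) : R :=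
  match k with O => 1 | S k => acoef al k * (INR k + al) / (INR k + 1) end.

Lemma acoef_bounds al k : 0 < al < 1 -> 0 < acoef al k <= 1.
Proof.
  intros Ha. induction k; simpl. lra.
  assert (0 <= INR k) by apply pos_INR.
  assert (0 < (INR k + al) / (INR k + 1) <= 1).
  { split. apply Rdiv_lt_0_compat; lra. apply Rmult_le_reg_r with (INR k + 1). lra.
    unfold Rdiv; rewrite Rmult_assoc, Rinv_l by lra. lra. }
  unfold Rdiv in *. rewrite Rmult_assoc. split. apply Rmult_lt_0_compat; lra.
  apply Rle_trans with (1 * ((INR k + al) * / (INR k + 1))). apply Rmult_le_compat_r; lra. lra.
Qed.

Lemma acoef_rec al k : INR (S k) * acoef al (S k) = (INR k + al) * acoef al k.
Proof. simpl acoef. rewrite S_INR. assert (0 <= INR k) by apply pos_INR. field. lra. Qed.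

Lemma acoef_disk al x : 0 < al < 1 -> Rabs x < 1 -> CV_disk (acoef al) x.
Proof.
  intros Ha Hx. unfold CV_disk.
  apply (@ex_series_le R_AbsRing R_CompleteNormedModule _ (fun n => Rabs x ^ n)).
  - intros n. change norm with Rabs. simpl. rewrite Rabs_Rabsolu, Rabs_mult, RPow_abs.
    destruct (acoef_bounds al n Ha). rewrite Rabs_pos_eq by lra.
    assert (0 <= Rabs x ^ n) by (apply pow_le, Rabs_pos). rewrite <- RPow_abs. nra.
  - exists (/ (1 - Rabs x)). apply is_series_geom. rewrite Rabs_Rabsolu; auto.
Qed.

Lemma acoef_radius al x : 0 < al < 1 -> Rabs x < 1 -> Rbar_lt (Rabs x) (CV_radius (acoef al)).
Proof.
  intros Ha Hx. set (y := (Rabs x + 1) / 2).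
  assert (Hy : CV_disk (acoef al) y) by (apply acoef_disk; auto; unfold y; pose proof (Rabs_pos x); rewrite Rabs_pos_eq; lra).
  unfold CV_radius. destruct (Lub_Rbar_correct (CV_disk (acoef al))) as [Hub _].
  specialize (Hub y Hy). destruct (Lub_Rbar (CV_disk (acoef al))); simpl in *; auto.
  unfold y in Hub. lra.
Qed.

Lemma pser_is_series a x : Rbar_lt (Rabs x) (CV_radius a) -> is_series (fun n => a n * x ^ n) (PSeries a x).
Proof.
  intros H. apply Series_correct. apply ex_series_Rabs. apply CV_disk_inside; auto.
Qed.

Lemma pser_ode al x : 0 < al < 1 -> Rabs x < 1 ->
  (1 - x) * PSeries (PS_derive (acoef al)) x = al * PSeries (acoef al) x.
Proof.
  intros Ha Hx. set (a := acoef al).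
  set (p := fun n => a n * x ^ n). set (d := fun n => PS_derive a n * x ^ n).
  assert (Hid : forall N, (1 - x) * fs d N = al * fs p N - INR N * a N * x ^ N).
  { induction N. simpl. ring.
    simpl fs. rewrite Rmult_plus_distr_l, IHN. unfold d, p, PS_derive.
    pose proof (acoef_rec al N). fold a in H. rewrite S_INR in *.
    replace (x ^ S N) with (x * x ^ N) by (simpl; ring).
    replace ((INR N + 1) * a (S N) * (x * x ^ N)) with (((INR N + 1) * a (S N)) * (x * x ^ N)) by ring.
    rewrite H. ring. }
  assert (Hr : Rbar_lt (Rabs x) (CV_radius a)) by (apply acoef_radius; auto).
  assert (Hrd : Rbar_lt (Rabs x) (CV_radius (PS_derive a))) by (rewrite CV_radius_derive; auto).
  pose proof (pser_is_series a x Hr) as Hp. pose proof (pser_is_series _ x Hrd) as Hd.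
  apply is_series_fs in Hp. apply is_series_fs in Hd.
  assert (Hw : is_lim_seq (fun N => INR N * a N * x ^ N) 0).
  { apply is_lim_seq_incr_1.
    assert (Hd0 : is_lim_seq d 0) by (apply ex_series_lim_0; eexists; apply is_series_fs; exact Hd).
    apply (is_lim_seq_scal_l _ x) in Hd0. simpl in Hd0. rewrite Rmult_0_r in Hd0.
    eapply is_lim_seq_ext; [|exact Hd0]. intros n. unfold d, PS_derive. simpl pow. ring. }
  assert (L1 := is_lim_seq_scal_l _ (1 - x) _ Hd). simpl in L1.
  assert (L2 := is_lim_seq_minus' _ _ _ _ (is_lim_seq_scal_l _ al _ Hp) Hw). simpl in L2.
  apply is_lim_seq_unique in L1. apply is_lim_seq_unique in L2.
  assert (Finite ((1 - x) * PSeries (PS_derive a) x) = Finite (al * PSeries a x - 0)).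
  { rewrite <- L1, <- L2. apply Lim_seq_ext. intros; apply Hid. }
  injection H; intros; lra.
Qed.

Lemma pser_value al x : 0 < al < 1 -> 0 <= x < 1 -> PSeries (acoef al) x = Rpower (1 - x) (- al).
Proof.
  intros Ha Hx. set (a := acoef al).
  set (g := fun y => exp (al * ln (1 - y)) * PSeries a y).
  assert (Hg : forall y, -1 < y < 1 -> is_derive g y 0).
  { intros y Hy. assert (Hr : Rbar_lt (Rabs y) (CV_radius a)) by (apply acoef_radius; auto; apply Rabs_def1; lra).
    unfold g.
    assert (H1 : is_derive (fun y => exp (al * ln (1 - y))) y (exp (al * ln (1 - y)) * (al * (-1 / (1 - y))))).
    { auto_derive. lra. replace (1 + - y) with (1 - y) by ring. field. lra. }
    pose proof (is_derive_PSeries a y Hr) as H2.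
    pose proof (is_derive_mult _ _ _ _ _ H1 H2 (fun n m => Rmult_comm n m)) as H3.
    unfold mult, plus in H3; simpl in H3.
    replace 0 with (exp (al * ln (1 - y)) * (al * (-1 / (1 - y))) * PSeries a y + exp (al * ln (1 - y)) * PSeries (PS_derive a) y).
    exact H3.
    pose proof (pser_ode al y Ha ltac:(apply Rabs_def1; lra)). fold a in H.
    apply Rmult_eq_reg_r with (1 - y); [|lra].
    replace ((exp (al * ln (1 - y)) * (al * (-1 / (1 - y))) * PSeries a y + exp (al * ln (1 - y)) * PSeries (PS_derive a) y) * (1 - y))
      with (exp (al * ln (1 - y)) * ((1 - y) * PSeries (PS_derive a) y - al * PSeries a y)) by (field; lra).
    rewrite H. ring. }
  assert (Heq : g x = g 0).
  { destruct (Req_dec x 0) as [->|Hx0]; auto.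
    destruct (MVT_gen g 0 x (fun _ => 0)) as [c [Hc E]].
    - intros y Hy. apply Hg. rewrite Rmin_left, Rmax_right in Hy by lra. lra.
    - intros y Hy. rewrite Rmin_left, Rmax_right in Hy by lra.
      apply continuity_pt_filterlim. apply (ex_derive_continuous g). eexists; apply Hg; lra.
    - lra. }
  unfold g in Heq. rewrite PSeries_0, Rminus_0_r, ln_1, Rmult_0_r, exp_0, Rmult_1_l in Heq.
  change (a 0%nat) with 1 in Heq.
  unfold Rpower. apply Rmult_eq_reg_l with (exp (al * ln (1 - x))). 2: apply Rgt_not_eq, exp_pos.
  rewrite Heq, <- exp_plus. replace (al * ln (1 - x) + - al * ln (1 - x)) with 0 by ring. rewrite exp_0; reflexivity.
Qed.

Lemma cmp_deriv (F H dF dH : R -> R) a b : a <= b ->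
  (forall s, a <= s <= b -> is_derive F s (dF s)) ->
  (forall s, a <= s <= b -> is_derive H s (dH s)) ->
  (forall s, a <= s <= b -> dH s <= dF s) ->
  H b - H a <= F b - F a.
Proof.
  intros Hab HF HH Hd. destruct (Req_dec a b) as [->|Hne]. lra.
  destruct (MVT_gen (fun s => F s - H s) a b (fun s => dF s - dH s)) as [c [Hc Hm]].
  - intros s Hs. rewrite Rmin_left, Rmax_right in Hs by lra.
    apply (is_derive_minus F H); [apply HF|apply HH]; lra.
  - intros s Hs. rewrite Rmin_left, Rmax_right in Hs by lra.
    apply continuity_pt_filterlim. apply (ex_derive_continuous (fun s => F s - H s)).
    eexists. apply (is_derive_minus F H); [apply HF|apply HH]; lra.
  - rewrite Rmin_left, Rmax_right in Hc by lra.
    assert (0 <= (dF c - dH c) * (b - a)). { apply Rmult_le_pos. pose proof (Hd c Hc); lra. lra. }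
    lra.
Qed.

Lemma fs_prod u v N K : fs u N * fs v K = fs (fun n => fs (fun k => u n * v k) K) N.
Proof.
  induction N; simpl. ring. rewrite Rmult_plus_distr_r, IHN. f_equal.
  rewrite <- fs_scal. reflexivity.
Qed.

Definition DS (al r : R) (N K : nat) : R :=
  fs (fun n => fs (fun k => acoef al k * r ^ n / (INR n + INR k + 1)) K) N.

Definition Fpoly (al r : R) (N K : nat) (s : R) : R :=
  fs (fun n => fs (fun k => acoef al k * r ^ n * (s ^ (n + k + 1) / (INR n + INR k + 1))) K) N.

Definition PK (al : R) (K : nat) (s : R) : R := fs (fun k => acoef al k * s ^ k) K.
Definition QN (r : R) (N : nat) (s : R) : R := fs (fun n => (r * s) ^ n) N.

Lemma Fpoly_derive al r N K s : is_derive (Fpoly al r N K) s (PK al K s * QN r N s).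
Proof.
  unfold PK, QN. rewrite Rmult_comm, fs_prod. unfold Fpoly.
  apply (is_derive_fs (fun s n => fs (fun k => acoef al k * r ^ n * (s ^ (n + k + 1) / (INR n + INR k + 1))) K)).
  intros n _. apply (is_derive_fs (fun s k => acoef al k * r ^ n * (s ^ (n + k + 1) / (INR n + INR k + 1)))).
  intros k _. assert (0 <= INR n) by apply pos_INR. assert (0 <= INR k) by apply pos_INR.
  auto_derive. lra. rewrite Rpow_mult_distr.
  replace (n + k + 1)%nat with (S (n + k)) by lia. simpl pred. rewrite S_INR, plus_INR, pow_add. field. lra.
Qed.

Lemma fs_geom z N : z <> 1 -> fs (fun n => z ^ n) N = (1 - z ^ N) / (1 - z).
Proof.
  intros Hz. induction N; simpl. field. lra. rewrite IHN. field. lra.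
Qed.

Lemma geom_alt_lb z M : 0 <= z -> fs (fun m => (- z) ^ m) (2 * M) <= / (1 + z).
Proof.
  intros Hz. rewrite fs_geom by lra.
  replace ((- z) ^ (2 * M)) with (z ^ (2 * M)) by (rewrite !pow_mult; f_equal; ring).
  assert (0 <= z ^ (2 * M)) by (apply pow_le; lra).
  replace (1 - - z) with (1 + z) by ring.
  unfold Rdiv. rewrite <- (Rmult_1_l (/ (1 + z))) at 2. apply Rmult_le_compat_r.
  apply Rlt_le, Rinv_0_lt_compat; lra. lra.
Qed.

Lemma PK_lb al K s : 0 < al < 1 -> 0 <= s < 1 -> Rpower (1 - s) (- al) - s ^ K / (1 - s) <= PK al K s.
Proof.
  intros Ha Hs. rewrite <- pser_value by auto. unfold PSeries, PK.
  assert (Hr : Rbar_lt (Rabs s) (CV_radius (acoef al))) by (apply acoef_radius; auto; rewrite Rabs_pos_eq; lra).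
  assert (Series (fun k => acoef al k * s ^ k) <= fs (fun k => acoef al k * s ^ k) K + s ^ K / (1 - s)).
  { apply series_tail_le with (w := fun n => s ^ K * s ^ n).
    - intros n. destruct (acoef_bounds al n Ha). assert (0 <= s ^ n) by (apply pow_le; lra). nra.
    - eexists; apply pser_is_series; auto.
    - intros n. assert (0 <= s ^ n) by (apply pow_le; lra). assert (0 <= s ^ K) by (apply pow_le; lra). nra.
    - intros n. rewrite pow_add. destruct (acoef_bounds al (K + n) Ha).
      assert (0 <= s ^ K * s ^ n) by (apply Rmult_le_pos; apply pow_le; lra). nra.
    - unfold Rdiv. apply (is_series_scal_l (s ^ K) (fun n => s ^ n)). apply is_series_geom. rewrite Rabs_pos_eq; lra. }
  lra.
Qed.

Lemma PK_nonneg al K s : 0 < al < 1 -> 0 <= s -> 0 <= PK al K s.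
Proof.
  intros Ha Hs. apply fs_nonneg. intros n. destruct (acoef_bounds al n Ha). assert (0 <= s ^ n) by (apply pow_le; lra). nra.
Qed.

Lemma QN_lb r N s : 0 < r < 1 -> 0 <= s <= 1 -> (1 - r ^ N) / (1 - r * s) <= QN r N s.
Proof.
  intros Hr Hs. unfold QN. rewrite fs_geom by nra.
  assert (r * s <= r) by nra. assert (0 <= r * s) by nra.
  assert ((r * s) ^ N <= r ^ N) by (apply pow_incr; lra).
  unfold Rdiv. apply Rmult_le_compat_r. apply Rlt_le, Rinv_0_lt_compat; nra. lra.
Qed.

Lemma pow_le_one x n : 0 <= x <= 1 -> x ^ n <= 1.
Proof. intros H. rewrite <- (pow1 n). apply pow_incr; lra. Qed.

Lemma pw_lb al r N K s eta : 0 < al < 1 -> 0 < r < 1 -> 0 < eta <= 1 - r -> 0 <= s <= 1 - eta ->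
  (1 - r ^ N) * Rpower (1 - s) (- al) / ((1 - r) + (1 - s)) - (1 - eta) ^ K / eta / (1 - r)
  <= PK al K s * QN r N s.
Proof.
  intros Ha Hr He Hs. set (d := 1 - r). set (u := 1 - s). set (E := Rpower u (- al)).
  set (c := 1 - r ^ N). set (t := (1 - eta) ^ K / eta).
  assert (HE : 0 < E) by (unfold E, Rpower; apply exp_pos).
  assert (Hc : 0 <= c <= 1). { unfold c. assert (0 <= r ^ N <= 1) by (split; [apply pow_le; lra| apply pow_le_one; lra]). lra. }
  assert (Hrs1 : d <= 1 - r * s) by (unfold d; nra).
  assert (Hrs2 : 1 - r * s <= d + u) by (unfold d, u; nra).
  assert (HPK := PK_lb al K s Ha ltac:(lra)). fold u E in HPK.
  assert (Ht : s ^ K / u <= t).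
  { unfold t. apply Rmult_le_compat. apply pow_le; lra. apply Rlt_le, Rinv_0_lt_compat; unfold u; lra.
    apply pow_incr; lra. apply Rinv_le_contravar; unfold u; lra. }
  assert (HQ := QN_lb r N s Hr ltac:(lra)). fold c in HQ.
  assert (HP0 := PK_nonneg al K s Ha ltac:(lra)).
  assert (Ht0 : 0 <= t) by (unfold t; apply Rmult_le_pos; [apply pow_le; lra| apply Rlt_le, Rinv_0_lt_compat; lra]).
  assert (Hd0 : 0 < d) by (unfold d; lra).
  apply Rle_trans with (PK al K s * (c / (1 - r * s))).
  2:{ apply Rmult_le_compat_l; auto. }
  apply Rle_trans with ((E - t) * (c / (1 - r * s))).
  2:{ apply Rmult_le_compat_r. apply Rmult_le_pos. lra. apply Rlt_le, Rinv_0_lt_compat; lra. lra. }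
  assert (c * E / (d + u) <= c * E / (1 - r * s)).
  { unfold Rdiv. apply Rmult_le_compat_l. apply Rmult_le_pos; lra. apply Rinv_le_contravar; lra. }
  assert (t * c / (1 - r * s) <= t / d).
  { unfold Rdiv. rewrite Rmult_assoc. apply Rmult_le_compat_l. lra.
    apply Rle_trans with (1 * / (1 - r * s)). apply Rmult_le_compat_r. apply Rlt_le, Rinv_0_lt_compat; lra. lra.
    rewrite Rmult_1_l. apply Rinv_le_contravar; lra. }
  replace ((E - t) * (c / (1 - r * s))) with (c * E / (1 - r * s) - t * c / (1 - r * s)) by (field; lra).
  lra.
Qed.

Lemma alt_term_eq z m : (- z) ^ m = (-1) ^ m * z ^ m.
Proof. replace (- z) with (-1 * z) by ring. apply Rpow_mult_distr. Qed.

Lemma piece_lb (E v w : R) M : 0 < E -> 0 < v -> 0 < w ->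
  fs (fun m => (-1) ^ m * w ^ m * E / v ^ (m + 1)) (2 * M) <= E / (v + w).
Proof.
  intros HE Hv Hw.
  assert (H := geom_alt_lb (w / v) M ltac:(apply Rlt_le, Rdiv_lt_0_compat; lra)).
  replace (E / (v + w)) with (E / v * / (1 + w / v)) by (field; lra).
  replace (fs (fun m => (-1) ^ m * w ^ m * E / v ^ (m + 1)) (2 * M))
    with (E / v * fs (fun m => (- (w / v)) ^ m) (2 * M)).
  apply Rmult_le_compat_l; auto. apply Rlt_le, Rdiv_lt_0_compat; lra.
  rewrite <- fs_scal. apply fs_ext. intros m _. rewrite alt_term_eq.
  unfold Rdiv. rewrite Rpow_mult_distr, pow_inv, pow_add. field.
  try split; try apply pow_nonzero; lra.
Qed.

Definition G1 (al d : R) (M : nat) (s : R) : R :=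
  fs (fun m => - ((-1) ^ m * (1 - s) ^ (m + 1) * Rpower (1 - s) (- al) / ((INR m + (1 - al)) * d ^ (m + 1)))) (2 * M).
Definition G2 (al d : R) (M : nat) (s : R) : R :=
  fs (fun m => (-1) ^ m * d ^ m * Rpower (1 - s) (- al) / ((INR m + al) * (1 - s) ^ m)) (2 * M).

Lemma G1_derive al d M s : 0 < al < 1 -> 0 < d -> s < 1 ->
  is_derive (G1 al d M) s (fs (fun m => (-1) ^ m * (1 - s) ^ m * Rpower (1 - s) (- al) / d ^ (m + 1)) (2 * M)).
Proof.
  intros Ha Hd Hs. unfold G1.
  apply (is_derive_fs (fun s m => - ((-1) ^ m * (1 - s) ^ (m + 1) * Rpower (1 - s) (- al) / ((INR m + (1 - al)) * d ^ (m + 1))))).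
  intros m _. unfold Rpower. assert (0 <= INR m) by apply pos_INR.
  auto_derive. lra.
  replace (m + 1)%nat with (S m) by lia. simpl pred. rewrite S_INR.
  replace (1 + - s) with (1 - s) by ring.
  simpl pow. field. repeat split; try lra. apply pow_nonzero; lra.
Qed.

Lemma G2_derive al d M s : 0 < al < 1 -> 0 < d -> s < 1 ->
  is_derive (G2 al d M) s (fs (fun m => (-1) ^ m * d ^ m * Rpower (1 - s) (- al) / (1 - s) ^ (m + 1)) (2 * M)).
Proof.
  intros Ha Hd Hs. unfold G2.
  apply (is_derive_fs (fun s m => (-1) ^ m * d ^ m * Rpower (1 - s) (- al) / ((INR m + al) * (1 - s) ^ m))).
  intros m _. unfold Rpower. assert (0 <= INR m) by apply pos_INR.
  auto_derive. split. lra. split; [|auto]. apply Rmult_integral_contrapositive. split. lra. apply pow_nonzero; lra.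
  replace (1 + - s) with (1 - s) by ring.
  destruct m. simpl. field. lra.
  simpl pred. rewrite S_INR. rewrite Nat.add_1_r. simpl pow. field. rewrite S_INR in H. split. apply pow_nonzero; lra. split; lra.
Qed.

Lemma Fpoly_1 al r N K : Fpoly al r N K 1 = DS al r N K.
Proof.
  unfold Fpoly, DS. apply fs_ext; intros n _. apply fs_ext; intros k _. rewrite pow1.
  assert (0 <= INR n) by apply pos_INR. assert (0 <= INR k) by apply pos_INR. field. lra.
Qed.

Lemma Fpoly_0 al r N K : Fpoly al r N K 0 = 0.
Proof.
  unfold Fpoly. transitivity (fs (fun _ => 0) N).
  apply fs_ext; intros n _. transitivity (fs (fun _ => 0) K). apply fs_ext; intros k _.
  rewrite Nat.add_1_r, pow_i by lia. unfold Rdiv; ring.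
  clear; induction K; simpl; [reflexivity| rewrite IHK; ring].
  clear; induction N; simpl; [reflexivity| rewrite IHN; ring].
Qed.

Lemma Fpoly_mono al r N K s : 0 < al < 1 -> 0 < r -> 0 <= s <= 1 -> Fpoly al r N K s <= Fpoly al r N K 1.
Proof.
  intros Ha Hr Hs. unfold Fpoly. apply fs_le; intros n _. apply fs_le; intros k _.
  assert (0 <= INR n) by apply pos_INR. assert (0 <= INR k) by apply pos_INR.
  destruct (acoef_bounds al k Ha). assert (0 < r ^ n) by (apply pow_lt; lra).
  apply Rmult_le_compat_l. apply Rmult_le_pos; lra.
  unfold Rdiv. apply Rmult_le_compat_r. apply Rlt_le, Rinv_0_lt_compat; lra.
  rewrite pow1. apply pow_le_one; lra.
Qed.

Lemma DS_lb al r N K M eta : 0 < al < 1 -> 0 < r < 1 -> 0 < eta <= 1 - r ->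
  (1 - r ^ N) * ((G1 al (1 - r) M (1 - eta) - G1 al (1 - r) M (1 - (1 - r)))
                 + (G2 al (1 - r) M (1 - (1 - r)) - G2 al (1 - r) M 0))
  - (1 - eta) ^ K / eta / (1 - r) * (1 - eta) <= DS al r N K.
Proof.
  intros Ha Hr He. set (d := 1 - r). set (c := 1 - r ^ N). set (t := (1 - eta) ^ K / eta).
  assert (Hd : 0 < d) by (unfold d; lra). assert (Hed : eta <= d) by (unfold d; lra). assert (Hd1 : d < 1) by (unfold d; lra).
  assert (Hc : 0 <= c). { unfold c. assert (r ^ N <= 1) by (apply pow_le_one; lra). lra. }
  assert (Key : forall s, 0 <= s <= 1 - eta -> forall g,
     g <= Rpower (1 - s) (- al) / (d + (1 - s)) -> c * g - t / d <= PK al K s * QN r N s).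
  { intros s Hs g Hg. pose proof (pw_lb al r N K s eta Ha Hr He Hs). fold c d t in H.
    apply Rle_trans with (c * Rpower (1 - s) (- al) / (d + (1 - s)) - t / d); [|exact H].
    unfold Rdiv. rewrite Rmult_assoc. apply Rplus_le_compat_r. apply Rmult_le_compat_l; auto. }
  assert (I1 := cmp_deriv (Fpoly al r N K) (fun s => c * G1 al d M s - t / d * s)
     (fun s => PK al K s * QN r N s)
     (fun s => c * fs (fun m => (-1) ^ m * (1 - s) ^ m * Rpower (1 - s) (- al) / d ^ (m + 1)) (2 * M) - t / d * 1)
     (1 - d) (1 - eta) ltac:(lra)).
  assert (I2 := cmp_deriv (Fpoly al r N K) (fun s => c * G2 al d M s - t / d * s)
     (fun s => PK al K s * QN r N s)
     (fun s => c * fs (fun m => (-1) ^ m * d ^ m * Rpower (1 - s) (- al) / (1 - s) ^ (m + 1)) (2 * M) - t / d * 1)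
     0 (1 - d) ltac:(lra)).
  cbv beta in I1, I2.
  assert (HE : forall s, s < 1 -> 0 < Rpower (1 - s) (- al)) by (intros; unfold Rpower; apply exp_pos).
  assert (J1 : Fpoly al r N K (1 - eta) - Fpoly al r N K (1 - d) >=
               (c * G1 al d M (1 - eta) - t / d * (1 - eta)) - (c * G1 al d M (1 - d) - t / d * (1 - d))).
  { apply Rle_ge, I1.
    - intros; apply Fpoly_derive.
    - intros s Hs. apply (is_derive_minus (fun s => c * G1 al d M s) (fun s => t / d * s)).
      apply (is_derive_scal (G1 al d M) s c). apply G1_derive; auto; lra.
      apply (is_derive_scal (fun s => s) s (t / d)). apply (is_derive_id s).
    - intros s Hs. rewrite Rmult_1_r. apply Key. lra.
      apply piece_lb. apply HE; lra. lra. lra. }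
  assert (J2 : Fpoly al r N K (1 - d) - Fpoly al r N K 0 >=
               (c * G2 al d M (1 - d) - t / d * (1 - d)) - (c * G2 al d M 0 - t / d * 0)).
  { apply Rle_ge, I2.
    - intros; apply Fpoly_derive.
    - intros s Hs. apply (is_derive_minus (fun s => c * G2 al d M s) (fun s => t / d * s)).
      apply (is_derive_scal (G2 al d M) s c). apply G2_derive; auto; lra.
      apply (is_derive_scal (fun s => s) s (t / d)). apply (is_derive_id s).
    - intros s Hs. rewrite Rmult_1_r. apply Key. lra.
      rewrite Rplus_comm. apply piece_lb. apply HE; lra. lra. lra. }
  rewrite Fpoly_0 in J2. pose proof (Fpoly_mono al r N K (1 - eta) Ha ltac:(lra) ltac:(lra)).
  rewrite Fpoly_1 in H.
  unfold t in *. unfold Rdiv in *. lra.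
Qed.

Lemma fs_abs_bound v N B : (forall m, (m < N)%nat -> Rabs (v m) <= B) -> Rabs (fs v N) <= INR N * B.
Proof.
  induction N; intros H. simpl. rewrite Rabs_R0; lra.
  rewrite S_INR. simpl fs. eapply Rle_trans. apply Rabs_triang.
  pose proof (IHN ltac:(intros; apply H; lia)). pose proof (H N ltac:(lia)). lra.
Qed.

Lemma fs_lin4 a b c e N : fs a N - fs b N + fs c N - fs e N = fs (fun m => a m - b m + c m - e m) N.
Proof. induction N; simpl. ring. rewrite <- IHN. ring. Qed.

Lemma fs_lin3 k a b c N : k * fs a N - fs b N - fs c N = fs (fun m => k * a m - b m - c m) N.
Proof. induction N; simpl. ring. rewrite <- IHN. ring. Qed.

Definition Err1 al d eta M := fs (fun m => (-1) ^ m * eta ^ (m + 1) * Rpower eta (- al) / ((INR m + (1 - al)) * d ^ (m + 1))) (2 * M).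
Definition Err2 al d M := fs (fun m => (-1) ^ m * d ^ m / (INR m + al)) (2 * M).

Lemma total_eq al d eta M : 0 < al < 1 -> 0 < d -> 0 < eta ->
  (G1 al d M (1 - eta) - G1 al d M (1 - d)) + (G2 al d M (1 - d) - G2 al d M 0)
  = Rpower d (- al) * fs (salt al) (2 * M) - Err1 al d eta M - Err2 al d M.
Proof.
  intros Ha Hd He. unfold G1, G2, Err1, Err2.
  replace (1 - (1 - eta)) with eta by ring. replace (1 - (1 - d)) with d by ring. rewrite Rminus_0_r.
  assert (R1 : Rpower 1 (- al) = 1) by (unfold Rpower; rewrite ln_1, Rmult_0_r; apply exp_0).
  rewrite R1.
  match goal with |- ?a - ?b + (?c - ?e) = _ => replace (a - b + (c - e)) with (a - b + c - e) by ring end.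
  rewrite fs_lin4, fs_lin3. apply fs_ext. intros m _. unfold salt.
  assert (0 <= INR m) by apply pos_INR.
  rewrite pow1, pow_add. simpl pow.
  assert (d ^ m <> 0) by (apply pow_nonzero; lra).
  field. split. lra. split. apply pow_nonzero; lra. split; lra.
Qed.

Lemma Rpower_pos x y : 0 < Rpower x y.
Proof. unfold Rpower; apply exp_pos. Qed.

Lemma Rpower_inv_mul d al : 0 < d -> Rpower d al * Rpower d (- al) = 1.
Proof. intros. rewrite Rpower_Ropp. field. apply Rgt_not_eq, Rpower_pos. Qed.

Lemma ML_core al r N K M : 0 < al < 1 -> 0 < r < 1 ->
  let d := 1 - r in let eta := d * d in
  (1 - r ^ N) * (fs (salt al) (2 * M) - INR (2 * M) * (Rpower d (1 - al) / (1 - al) + Rpower d al / al))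
  - Rpower d al * ((1 - eta) ^ K / eta / d * (1 - eta))
  <= Rpower d al * DS al r N K.
Proof.
  intros Ha Hr d eta.
  assert (Hd : 0 < d < 1) by (unfold d; lra).
  assert (He : 0 < eta <= 1 - r) by (unfold eta, d; nra).
  pose proof (DS_lb al r N K M eta Ha Hr He) as HDS. fold d in HDS.
  rewrite total_eq in HDS by (unfold eta in *; lra).
  set (p := Rpower d al) in *.
  assert (Hp : 0 < p) by apply Rpower_pos.
  assert (Hc : 0 <= 1 - r ^ N <= 1). { assert (r ^ N <= 1) by (apply pow_le_one; lra). assert (0 <= r ^ N) by (apply pow_le; lra). lra. }
  assert (B1 : Rabs (p * Err1 al d eta M) <= INR (2 * M) * (Rpower d (1 - al) / (1 - al))).
  { rewrite Rabs_mult, Rabs_pos_eq by lra. unfold Err1.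
    rewrite <- (Rabs_pos_eq p) by lra. rewrite <- Rabs_mult.
    rewrite <- fs_scal. apply fs_abs_bound. intros m _.
    assert (0 <= INR m) by apply pos_INR.
    assert (E : p * ((-1) ^ m * eta ^ (m + 1) * Rpower eta (- al) / ((INR m + (1 - al)) * d ^ (m + 1)))
               = (-1) ^ m * d ^ m * (Rpower d (1 - al) / (INR m + (1 - al)))).
    { unfold eta, p, Rpower. rewrite ln_mult by lra. set (L := ln d).
      assert (Hd' : exp L = d) by (unfold L; apply exp_ln; lra).
      replace (- al * (L + L)) with (- al * L + - al * L) by ring. rewrite exp_plus.
      replace ((1 - al) * L) with (L + - al * L) by ring. rewrite exp_plus, Hd'.
      assert (Hf : exp (al * L) = / exp (- al * L)).
      { rewrite <- exp_Ropp. f_equal. ring. }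
      rewrite Hf. assert (exp (- al * L) > 0) by apply exp_pos.
      assert (d ^ m <> 0) by (apply pow_nonzero; lra).
      rewrite !pow_add, Rpow_mult_distr. simpl pow. field. repeat split; lra. }
    rewrite E, !Rabs_mult, pow_1_abs, Rabs_pos_eq with (x := d ^ m) by (apply pow_le; lra).
    rewrite Rabs_pos_eq.
    2:{ apply Rmult_le_pos. apply Rlt_le, Rpower_pos. apply Rlt_le, Rinv_0_lt_compat; lra. }
    assert (d ^ m <= 1) by (apply pow_le_one; lra).
    assert (Rpower d (1 - al) / (INR m + (1 - al)) <= Rpower d (1 - al) / (1 - al)).
    { unfold Rdiv. apply Rmult_le_compat_l. apply Rlt_le, Rpower_pos. apply Rinv_le_contravar; lra. }
    assert (0 <= Rpower d (1 - al) / (INR m + (1 - al))).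
    { apply Rmult_le_pos. apply Rlt_le, Rpower_pos. apply Rlt_le, Rinv_0_lt_compat; lra. }
    assert (0 <= d ^ m) by (apply pow_le; lra).
    nra. }
  assert (B2 : Rabs (p * Err2 al d M) <= INR (2 * M) * (p / al)).
  { unfold Err2. rewrite <- fs_scal. apply fs_abs_bound. intros m _.
    assert (0 <= INR m) by apply pos_INR.
    assert (d ^ m <= 1) by (apply pow_le_one; lra). assert (0 <= d ^ m) by (apply pow_le; lra).
    replace (p * ((-1) ^ m * d ^ m / (INR m + al))) with ((-1) ^ m * (d ^ m * (p / (INR m + al)))) by (field; lra).
    rewrite Rabs_mult, pow_1_abs, Rmult_1_l, Rabs_pos_eq.
    2:{ apply Rmult_le_pos; auto. apply Rlt_le, Rdiv_lt_0_compat; lra. }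
    assert (p / (INR m + al) <= p / al).
    { unfold Rdiv. apply Rmult_le_compat_l. lra. apply Rinv_le_contravar; lra. }
    assert (0 <= p / (INR m + al)) by (apply Rlt_le, Rdiv_lt_0_compat; lra).
    nra. }
  apply Rmult_le_compat_l with (r := p) in HDS; [|lra].
  set (S := fs (salt al) (2 * M)) in *.
  set (X := INR (2 * M) * (Rpower d (1 - al) / (1 - al) + p / al)).
  assert (Hexp : p * ((1 - r ^ N) * (Rpower d (- al) * S - Err1 al d eta M - Err2 al d M) -
     (1 - eta) ^ K / eta / d * (1 - eta)) =
     (1 - r ^ N) * (S - p * Err1 al d eta M - p * Err2 al d M) - p * ((1 - eta) ^ K / eta / d * (1 - eta))).
  { assert (p * Rpower d (- al) = 1) by (unfold p; apply Rpower_inv_mul; lra). 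
    transitivity ((1 - r ^ N) * ((p * Rpower d (- al)) * S - p * Err1 al d eta M - p * Err2 al d M) - p * ((1 - eta) ^ K / eta / d * (1 - eta))).
    ring. rewrite H. ring. }
  rewrite Hexp in HDS.
  assert (S - p * Err1 al d eta M - p * Err2 al d M >= S - X).
  { unfold X. apply Rabs_le_between in B1. apply Rabs_le_between in B2. lra. }
  assert ((1 - r ^ N) * (S - X) <= (1 - r ^ N) * (S - p * Err1 al d eta M - p * Err2 al d M)).
  { apply Rmult_le_compat_l; lra. }
  unfold X in *. lra.
Qed.

Lemma Rpower_ge_base x al : 0 < x <= 1 -> 0 < al <= 1 -> x <= Rpower x al.
Proof.
  intros Hx Ha. unfold Rpower.
  assert (Hl : ln x <= 0).
  { destruct (Req_dec x 1) as [->|Hne]. rewrite ln_1; lra.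
    rewrite <- ln_1. left. apply ln_increasing; lra. }
  rewrite <- (exp_ln x) at 1 by lra.
  destruct (Req_dec (al * ln x) (ln x)) as [E|Hne]. rewrite E; lra.
  left. apply exp_increasing. nra.
Qed.

Lemma small_rpower g tau : 0 < g -> 0 < tau -> forall d, 0 < d <= Rpower tau (/ g) -> Rpower d g <= tau.
Proof.
  intros Hg Ht d Hd. apply Rle_trans with (Rpower (Rpower tau (/ g)) g).
  apply Rle_Rpower_l; lra. rewrite Rpower_mult. replace (/ g * g) with 1 by (field; lra).
  rewrite Rpower_1; lra.
Qed.

Lemma pow_small x y : 0 <= x < 1 -> 0 < y -> exists N, x ^ N <= y.
Proof.
  intros Hx Hy. destruct (pow_lt_1_zero x ltac:(rewrite Rabs_pos_eq; lra) y Hy) as [N HN].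
  exists N. specialize (HN N (le_n N)). rewrite Rabs_pos_eq in HN by (apply pow_le; lra). lra.
Qed.

Lemma ML al eps : 0 < al < 1 -> 0 < eps <= 1 ->
  exists r N K, 0 < r < 1 /\
    PI / sin (PI * al) - eps <= Rpower ((1 + r) / 2) al * (Rpower (1 - r) al * DS al r N K).
Proof.
  intros Ha He. set (K0 := PI / sin (PI * al)).
  assert (HK0 : 3 < K0).
  { unfold K0. pose proof (sinPI_pos al Ha). pose proof (SIN_bound (PI * al)). pose proof PI_gt_3.
    apply Rlt_le_trans with PI. lra. unfold Rdiv. rewrite <- (Rmult_1_r PI) at 1.
    apply Rmult_le_compat_l. lra. rewrite <- Rinv_1. apply Rinv_le_contravar; lra. }
  destruct (archimed_cor1 (eps / 15) ltac:(lra)) as [M [HM1 HM2]].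
  assert (HMr : 1 <= INR M) by (apply (le_INR 1); lia).
  pose proof (salt_approx al M Ha ltac:(lia)) as HS. fold K0 in HS.
  set (S := fs (salt al) (2 * M)) in *.
  assert (HS' : K0 - eps / 5 <= S <= K0 + 1).
  { assert (3 / INR M <= eps / 5). { unfold Rdiv. assert (/ INR M <= eps / 15) by lra. lra. }
    apply Rabs_le_between in HS. lra. }
  set (C := INR (2 * M) * (/ (1 - al) + / al)).
  assert (HC : 0 < C). { unfold C. rewrite mult_INR. simpl INR. apply Rmult_lt_0_compat. lra.
    apply Rplus_lt_0_compat; apply Rinv_0_lt_compat; lra. }
  set (tau := eps / 5 / C).
  assert (Htau : 0 < tau) by (unfold tau; apply Rdiv_lt_0_compat; lra).
  set (d := Rmin (Rmin (Rpower tau (/ (1 - al))) (Rpower tau (/ al))) (Rmin (2 * eps / (5 * K0)) (1/2))).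
  assert (Hd0 : 0 < d).
  { unfold d. repeat apply Rmin_glb_lt; try apply Rpower_pos. apply Rdiv_lt_0_compat; lra. lra. }
  assert (Hd1 : d <= 1/2) by (unfold d; eapply Rle_trans; [apply Rmin_r| apply Rmin_r]).
  assert (Hd2 : d <= 2 * eps / (5 * K0)) by (unfold d; eapply Rle_trans; [apply Rmin_r| apply Rmin_l]).
  assert (Hr1 : Rpower d (1 - al) <= tau).
  { apply small_rpower; try lra. split; auto. unfold d. eapply Rle_trans; [apply Rmin_l| apply Rmin_l]. }
  assert (Hr2 : Rpower d al <= tau).
  { apply small_rpower; try lra. split; auto. unfold d. eapply Rle_trans; [apply Rmin_l| apply Rmin_r]. }
  set (r := 1 - d).
  assert (Hr : 0 < r < 1) by (unfold r; lra).
  assert (HX : INR (2 * M) * (Rpower d (1 - al) / (1 - al) + Rpower d al / al) <= eps / 5).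
  { apply Rle_trans with (INR (2 * M) * (tau * / (1 - al) + tau * / al)).
    apply Rmult_le_compat_l. apply pos_INR. unfold Rdiv. apply Rplus_le_compat; apply Rmult_le_compat_r;
      try (apply Rlt_le, Rinv_0_lt_compat; lra); auto.
    replace (INR (2 * M) * (tau * / (1 - al) + tau * / al)) with (tau * C) by (unfold C; ring).
    unfold tau. right. field. lra. }
  destruct (pow_small r (eps / 5 / (K0 + 1)) ltac:(lra) ltac:(apply Rdiv_lt_0_compat; lra)) as [N HN].
  set (eta := d * d).
  set (Z := Rpower d al * ((1 - eta) / eta / d)).
  assert (HZ : 0 < Z).
  { unfold Z, eta. apply Rmult_lt_0_compat. apply Rpower_pos. unfold Rdiv.
    apply Rmult_lt_0_compat; [apply Rmult_lt_0_compat|]; try apply Rinv_0_lt_compat; nra. }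
  destruct (pow_small (1 - eta) (eps / 5 / Z) ltac:(unfold eta; nra) ltac:(apply Rdiv_lt_0_compat; lra)) as [K HK].
  exists r, N, K. split; auto.
  pose proof (ML_core al r N K M Ha Hr) as Core. cbv zeta in Core.
  replace (1 - r) with d in * by (unfold r; ring). fold eta in Core.
  set (X := INR (2 * M) * (Rpower d (1 - al) / (1 - al) + Rpower d al / al)) in *.
  set (Y := Rpower d al * DS al r N K) in *.
  assert (HX0 : 0 <= X).
  { unfold X. apply Rmult_le_pos. apply pos_INR. apply Rplus_le_le_0_compat; unfold Rdiv;
    apply Rmult_le_pos; try apply Rlt_le, Rpower_pos; apply Rlt_le, Rinv_0_lt_compat; lra. }
  assert (T1 : r ^ N * (S - X) <= eps / 5).
  { assert (0 <= r ^ N) by (apply pow_le; lra).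
    apply Rle_trans with (eps / 5 / (K0 + 1) * (K0 + 1)).
    apply Rmult_le_compat; lra. right; field; lra. }
  assert (T2 : Rpower d al * ((1 - eta) ^ K / eta / d * (1 - eta)) <= eps / 5).
  { replace (Rpower d al * ((1 - eta) ^ K / eta / d * (1 - eta))) with ((1 - eta) ^ K * Z)
      by (unfold Z; field; unfold eta; nra).
    apply Rle_trans with (eps / 5 / Z * Z). apply Rmult_le_compat_r; lra. right; field; lra. }
  fold S in Core. assert (Eq1 : (1 - r ^ N) * (S - X) = (S - X) - r ^ N * (S - X)) by ring.
  assert (HY : K0 - 4 * eps / 5 <= Y) by lra.
  set (w := Rpower ((1 + r) / 2) al).
  assert (Hw : 1 - d / 2 <= w).
  { unfold w. replace ((1 + r) / 2) with (1 - d / 2) by (unfold r; field).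
    apply Rpower_ge_base; lra. }
  assert (HdK : d * K0 <= 2 * eps / 5).
  { apply Rle_trans with (2 * eps / (5 * K0) * K0). apply Rmult_le_compat_r; lra. right; field; lra. }
  assert (0 <= Y) by lra.
  apply Rle_trans with ((1 - d / 2) * Y). 2: apply Rmult_le_compat_r; lra.
  destruct (Rle_lt_dec K0 Y); nra.
Qed.

Lemma sum_n_fst (u : nat -> C) n : fst (@sum_n C_AbelianMonoid u n) = sum_n (fun k => fst (u k)) n.
Proof.
  induction n. rewrite !sum_O. reflexivity.
  rewrite !sum_Sn. simpl. rewrite <- IHn. reflexivity.
Qed.

Lemma sum_n_snd (u : nat -> C) n : snd (@sum_n C_AbelianMonoid u n) = sum_n (fun k => snd (u k)) n.
Proof.
  induction n. rewrite !sum_O. reflexivity.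
  rewrite !sum_Sn. simpl. rewrite <- IHn. reflexivity.
Qed.

Lemma lim_fst (f : nat -> C) (l : C) : filterlim f eventually (@locally C_UniformSpace l) ->
  is_lim_seq (fun n => fst (f n)) (fst l).
Proof.
  intros H. unfold is_lim_seq. eapply filterlim_comp. exact H.
  intros P [e He]. exists e. intros y Hy. apply He. destruct Hy as [H1 H2]. exact H1.
Qed.

Lemma lim_snd (f : nat -> C) (l : C) : filterlim f eventually (@locally C_UniformSpace l) ->
  is_lim_seq (fun n => snd (f n)) (snd l).
Proof.
  intros H. unfold is_lim_seq. eapply filterlim_comp. exact H.
  intros P [e He]. exists e. intros y Hy. apply He. destruct Hy as [H1 H2]. exact H2.
Qed.

Lemma C_series_fst (u : nat -> C) l : @is_series C_AbsRing C_NormedModule u l ->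
  is_series (fun n => fst (u n)) (fst l).
Proof.
  intros H. unfold is_series in *. change (is_lim_seq (sum_n (fun n => fst (u n))) (fst l)).
  eapply is_lim_seq_ext. intros n; apply sum_n_fst. apply lim_fst. exact H.
Qed.

Lemma C_series_snd (u : nat -> C) l : @is_series C_AbsRing C_NormedModule u l ->
  is_series (fun n => snd (u n)) (snd l).
Proof.
  intros H. unfold is_series in *. change (is_lim_seq (sum_n (fun n => snd (u n))) (snd l)).
  eapply is_lim_seq_ext. intros n; apply sum_n_snd. apply lim_snd. exact H.
Qed.

Lemma C_ex_series_fst (u : nat -> C) : @ex_series C_AbsRing C_NormedModule u -> ex_series (fun n => fst (u n)).
Proof. intros [l H]. exists (fst l). apply C_series_fst; auto. Qed.

Lemma Csum_eq (u : nat -> C) l : @is_series C_AbsRing C_NormedModule u l -> Csum u = l.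
Proof.
  intros H. unfold Csum. rewrite (is_series_unique _ _ (C_series_fst u l H)).
  rewrite (is_series_unique _ _ (C_series_snd u l H)). destruct l; reflexivity.
Qed.

Lemma Cmod_sum_n (u : nat -> C) n : Cmod (@sum_n C_AbelianMonoid u n) <= sum_n (fun k => Cmod (u k)) n.
Proof.
  induction n. rewrite !sum_O. lra.
  rewrite !sum_Sn. eapply Rle_trans. apply Cmod_triangle. change (plus (sum_n (fun k : nat => Cmod (u k)) n) (Cmod (u (S n))))
    with (sum_n (fun k : nat => Cmod (u k)) n + Cmod (u (S n))). lra.
Qed.

Lemma Cmod_lim_le (u : nat -> C) l B : @is_series C_AbsRing C_NormedModule u l ->
  (forall n, Cmod (@sum_n C_AbelianMonoid u n) <= B) -> Cmod l <= B.
Proof.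
  intros H HB. unfold is_series in H.
  assert (H1 := lim_fst _ _ H). assert (H2 := lim_snd _ _ H).
  assert (L := is_lim_seq_plus' _ _ _ _ (is_lim_seq_mult' _ _ _ _ H1 H1) (is_lim_seq_mult' _ _ _ _ H2 H2)).
  assert (B0 : 0 <= B) by (eapply Rle_trans; [apply Cmod_ge_0| apply (HB 0%nat)]).
  assert (LB : Rbar_le (fst l * fst l + snd l * snd l) (B * B)).
  { apply (is_lim_seq_le (fun n => fst (@sum_n C_AbelianMonoid u n) * fst (@sum_n C_AbelianMonoid u n)
       + snd (@sum_n C_AbelianMonoid u n) * snd (@sum_n C_AbelianMonoid u n)) (fun _ => B * B)).
    2: exact L. 2: apply is_lim_seq_const.
    intros n. specialize (HB n). unfold Cmod in HB.
    set (s := @sum_n C_AbelianMonoid u n) in *. clearbody s.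
    assert (Hq : 0 <= fst s ^ 2 + snd s ^ 2) by nra.
    assert (0 <= sqrt (fst s ^ 2 + snd s ^ 2)) by apply sqrt_pos.
    pose proof (sqrt_sqrt (fst s ^ 2 + snd s ^ 2) Hq).
    assert (sqrt (fst s ^ 2 + snd s ^ 2) * sqrt (fst s ^ 2 + snd s ^ 2) <= B * B) by (apply Rmult_le_compat; lra).
    change (fst s * fst s + snd s * snd s <= B * B). replace (fst s ^ 2 + snd s ^ 2) with (fst s * fst s + snd s * snd s) in * by ring. lra. }
  simpl in LB.
  unfold Cmod. rewrite <- (sqrt_square B) by auto. apply sqrt_le_1_alt. simpl pow. lra.
Qed.

Section Final.
Variable al : R.
Hypothesis Ha : 0 < al < 1.

Definition c0 : R := Rpower 2 (- al).
Definition Acf (k : nat) : C := RtoC (c0 * acoef al k).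

Lemma c0_bounds : 0 < c0 <= 1.
Proof.
  unfold c0, Rpower. split. apply exp_pos. rewrite <- exp_0.
  assert (0 < ln 2) by (rewrite <- ln_1; apply ln_increasing; lra).
  destruct (Req_dec (- al * ln 2) 0). rewrite H0; lra. left; apply exp_increasing; nra.
Qed.

Lemma Cpow_RtoC (x : R) n : Cpow (RtoC x) n = RtoC (x ^ n).
Proof. induction n; simpl. reflexivity. rewrite IHn. rewrite RtoC_mult. reflexivity. Qed.

Lemma Cmod_Acf_term z k : Cmod (Acf k * Cpow z k) = c0 * acoef al k * Cmod z ^ k.
Proof.
  unfold Acf. rewrite Cmod_mult, Cmod_R, Cmod_pow. destruct c0_bounds. destruct (acoef_bounds al k Ha).
  rewrite Rabs_pos_eq by nra. reflexivity.
Qed.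

Lemma Acf_series z : Cmod z < 1 ->
  exists l, @is_series C_AbsRing C_NormedModule (fun k => Acf k * Cpow z k)%C l /\
            Cmod l <= c0 * Rpower (1 - Cmod z) (- al).
Proof.
  intros Hz. pose proof (Cmod_ge_0 z) as Hz0.
  assert (Hr : Rbar_lt (Rabs (Cmod z)) (CV_radius (acoef al))) by (apply acoef_radius; auto; rewrite Rabs_pos_eq; lra).
  assert (Hex : @ex_series C_AbsRing C_NormedModule (fun k => Acf k * Cpow z k)%C).
  { apply (@ex_series_le C_AbsRing C_CompleteNormedModule _ (fun k => c0 * (acoef al k * Cmod z ^ k))).
    intros n. change (@norm C_AbsRing C_NormedModule) with Cmod. rewrite Cmod_Acf_term. right; ring.
    exists (PSeries (acoef al) (Cmod z) * c0). eapply is_series_ext; [|apply (is_series_scal_r c0 _ _ (pser_is_series _ _ Hr))]. intros; simpl; ring. }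
  destruct Hex as [l Hl]. exists l. split; auto.
  apply (Cmod_lim_le _ _ _ Hl). intros n.
  eapply Rle_trans. apply Cmod_sum_n.
  rewrite <- pser_value by (auto; lra).
  assert (E : sum_n (fun k => Cmod (Acf k * Cpow z k)) n = c0 * fs (fun k => acoef al k * Cmod z ^ k) (S n)).
  { rewrite sum_n_fs, <- fs_scal. apply fs_ext. intros; rewrite Cmod_Acf_term; ring. }
  rewrite E. destruct c0_bounds. apply Rmult_le_compat_l. lra.
  apply series_ge_fs. intros k. destruct (acoef_bounds al k Ha). assert (0 <= Cmod z ^ k) by (apply pow_le; lra). nra.
  eexists; apply pser_is_series; auto.
Qed.

Lemma weight_bound z : Cmod z < 1 -> kweight al z * (c0 * Rpower (1 - Cmod z) (- al)) <= 1.
Proof.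
  intros Hz. pose proof (Cmod_ge_0 z). set (x := Cmod z) in *.
  unfold kweight, c0, Rpower. fold x.
  rewrite <- !exp_plus. apply Rle_trans with (exp 0); [|rewrite exp_0; lra].
  replace (1 - x ^ 2) with ((1 - x) * (1 + x)) by ring.
  rewrite ln_mult by lra.
  assert (ln (1 + x) <= ln 2).
  { destruct (Req_dec x 1). lra. destruct (Rlt_dec (1 + x) 2). left; apply ln_increasing; lra. lra. }
  destruct (Req_dec (al * (ln (1 - x) + ln (1 + x)) + (- al * ln 2 + - al * ln (1 - x))) 0) as [E|E].
  rewrite E; lra. left. apply exp_increasing. nra.
Qed.

Lemma Acf_korenblum : in_korenblum al Acf /\ Rbar_le (korenblum_norm al Acf) (Finite 1).
Proof.
  assert (Hb : forall z, Cmod z < 1 -> kweight al z * Cmod (fun_of_coef Acf z) <= 1).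
  { intros z Hz. destruct (Acf_series z Hz) as [l [Hl Hm]]. unfold fun_of_coef. rewrite (Csum_eq _ _ Hl).
    eapply Rle_trans; [|apply (weight_bound z Hz)]. apply Rmult_le_compat_l.
    unfold kweight, Rpower; apply Rlt_le, exp_pos. exact Hm. }
  split. split.
  - intros z Hz. destruct (Acf_series z Hz) as [l [Hl _]]. exists l; exact Hl.
  - exists 1. exact Hb.
  - unfold korenblum_norm. destruct (Lub_Rbar_correct (fun y => exists z : C, Cmod z < 1 /\ y = kweight al z * Cmod (fun_of_coef Acf z))) as [_ Hl].
    apply Hl. intros y [z [Hz ->]]. simpl. apply Hb; auto.
Qed.


Lemma fst_mult_RtoC (x : C) (t : R) : fst (x * RtoC t)%C = fst x * t.
Proof. destruct x; simpl; ring. Qed.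

Lemma hb_eq n : fst (hilbert_coef Acf n) = Series (fun k => c0 * acoef al k * / INR (n + k + 1)).
Proof. unfold hilbert_coef, Csum. simpl fst. apply Series_ext. intros k. unfold Acf. simpl. ring. Qed.

Lemma weight_id r : 0 < r < 1 -> Rpower (1 - r ^ 2) al * c0 = Rpower ((1 + r) / 2) al * Rpower (1 - r) al.
Proof.
  intros Hr. unfold c0, Rpower. rewrite <- !exp_plus. f_equal.
  replace (1 - r ^ 2) with ((1 - r) * (1 + r)) by ring.
  rewrite ln_mult, ln_div by lra. ring.
Qed.

Lemma hilbert_value r N K : hilbert_defined Acf -> analytic_on_disc (hilbert_coef Acf) -> 0 < r < 1 ->
  Rpower ((1 + r) / 2) al * (Rpower (1 - r) al * DS al r N K)
  <= kweight al (RtoC r) * Cmod (fun_of_coef (hilbert_coef Acf) (RtoC r)).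
Proof.
  intros Hd Han Hr. destruct c0_bounds as [Hc0 Hc1].
  set (hb := fun n => fst (hilbert_coef Acf n)).
  assert (Hterm : forall n k, 0 <= c0 * acoef al k * / INR (n + k + 1)).
  { intros n k. destruct (acoef_bounds al k Ha). apply Rmult_le_pos. nra.
    apply Rlt_le, Rinv_0_lt_compat. apply lt_0_INR. lia. }
  assert (Hhb : forall n, fs (fun k => c0 * acoef al k * / INR (n + k + 1)) K <= hb n /\ 0 <= hb n).
  { intros n. unfold hb. rewrite hb_eq.
    assert (Hex : ex_series (fun k => c0 * acoef al k * / INR (n + k + 1))).
    { destruct (C_ex_series_fst _ (Hd n)) as [l Hl]. exists l. eapply is_series_ext; [|exact Hl].
      intros k. unfold Acf. simpl. ring. }
    split. apply series_ge_fs; auto. apply (series_ge_fs _ 0); auto. }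
  assert (Hfun : fst (fun_of_coef (hilbert_coef Acf) (RtoC r)) = Series (fun n => hb n * r ^ n)).
  { unfold fun_of_coef, Csum. apply Series_ext. intros n. rewrite Cpow_RtoC, fst_mult_RtoC. reflexivity. }
  assert (Hexf : ex_series (fun n => hb n * r ^ n)).
  { assert (Cmod (RtoC r) < 1) by (rewrite Cmod_R, Rabs_pos_eq; lra).
    destruct (C_ex_series_fst _ (Han _ H)) as [l Hl]. exists l. eapply is_series_ext; [|exact Hl].
    intros n. cbv beta. rewrite Cpow_RtoC, fst_mult_RtoC. reflexivity. }
  assert (HS : c0 * DS al r N K <= Series (fun n => hb n * r ^ n)).
  { apply Rle_trans with (fs (fun n => hb n * r ^ n) N).
    - unfold DS. rewrite <- fs_scal. apply fs_le. intros n _.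
      apply Rle_trans with (fs (fun k => c0 * acoef al k * / INR (n + k + 1)) K * r ^ n).
      + right. rewrite <- fs_scal. rewrite (Rmult_comm (fs _ K) (r ^ n)). rewrite <- fs_scal. apply fs_ext. intros k _.
        rewrite !plus_INR. simpl INR. unfold Rdiv. ring.
      + apply Rmult_le_compat_r. apply pow_le; lra. apply Hhb.
    - apply series_ge_fs; auto. intros n. apply Rmult_le_pos. apply Hhb. apply pow_le; lra. }
  assert (Hc : fst (fun_of_coef (hilbert_coef Acf) (RtoC r)) <= Cmod (fun_of_coef (hilbert_coef Acf) (RtoC r))).
  { eapply Rle_trans. apply Rle_abs. apply re_le_Cmod. }
  unfold kweight. rewrite Cmod_R, Rabs_pos_eq by lra.
  rewrite <- Rmult_assoc, <- weight_id by auto.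
  assert (Hw : 0 < Rpower (1 - r ^ 2) al) by apply Rpower_pos.
  rewrite Rmult_assoc. apply Rmult_le_compat_l. lra. lra.
Qed.

End Final.

Theorem mainTheorem1 (alpha : R) (Ha0 : 0 < alpha) (Ha1 : alpha < 1)
  (Hacts : forall a : nat -> C, in_korenblum alpha a ->
             hilbert_defined a /\ in_korenblum alpha (hilbert_coef a)) :
  Rbar_le (Finite (PI / sin (PI * alpha))) (hilbert_norm alpha).
Proof.
  assert (Ha : 0 < alpha < 1) by lra.
  destruct (Acf_korenblum alpha Ha) as [Hk Hn].
  destruct (Hacts _ Hk) as [Hd Hk2]. destruct Hk2 as [Han [M HM]].
  set (E := fun y => exists z : C, Cmod z < 1 /\
              y = kweight alpha z * Cmod (fun_of_coef (hilbert_coef (Acf alpha)) z)).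
  destruct (Lub_Rbar_correct E) as [Hub Hlub].
  assert (HLM : Rbar_le (Lub_Rbar E) M).
  { apply Hlub. intros y [z [Hz ->]]. simpl. apply HM; auto. }
  set (v0 := kweight alpha (RtoC 0) * Cmod (fun_of_coef (hilbert_coef (Acf alpha)) (RtoC 0))).
  assert (Hv0 : Rbar_le v0 (Lub_Rbar E)).
  { apply Hub. exists (RtoC 0). split. rewrite Cmod_R, Rabs_R0; lra. reflexivity. }
  set (K0 := PI / sin (PI * alpha)).
  destruct (Lub_Rbar E) as [y| |] eqn:HL; simpl in HLM, Hv0; try contradiction.
  assert (Hy : Rbar_le (Finite y) (hilbert_norm alpha)).
  { unfold hilbert_norm. destruct (Lub_Rbar_correct (fun y0 => exists a : nat -> C,
       in_korenblum alpha a /\ Rbar_le (korenblum_norm alpha a) (Finite 1) /\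
       korenblum_norm alpha (hilbert_coef a) = Finite y0)) as [Hub2 _].
    apply Hub2. exists (Acf alpha). split; [exact Hk|split; [exact Hn|]]. exact HL. }
  apply Rbar_le_trans with (Finite y); auto. simpl.
  destruct (Rle_lt_dec K0 y) as [|Hlt]; auto. exfalso.
  set (eps := Rmin 1 ((K0 - y) / 2)).
  assert (He : 0 < eps <= 1).
  { unfold eps. split. apply Rmin_glb_lt; lra. apply Rmin_l. }
  destruct (ML alpha eps Ha He) as [r [N [K [Hr Hml]]]].
  pose proof (hilbert_value alpha Ha r N K Hd Han Hr) as Hv.
  assert (Hin : Rbar_le (kweight alpha (RtoC r) * Cmod (fun_of_coef (hilbert_coef (Acf alpha)) (RtoC r))) (Finite y)).
  { apply Hub. exists (RtoC r). split; auto. rewrite Cmod_R, Rabs_pos_eq; lra. }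
  simpl in Hin. fold K0 in Hml.
  assert (eps <= (K0 - y) / 2) by apply Rmin_r.
  lra.
Qed.
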